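(* Let $R$ be a finite ring with identity, $\alpha\in(0,1)$, and let $\pi_U$ be the stationary distribution of the Markov chain $(X^U_t)$ on $R$ defined below. Then for every $x\in R$, \[\pi_U(x)=\frac{\alpha+(1-\alpha)\displaystyle\sum_{y\in\phi,\ I_x\subsetneq I_y}|U_y|\,|\mathrm{LAnn}_R(y)|\,\pi_U(y)}{|R|-(1-\alpha)\,|U_x|\,|\mathrm{LAnn}_R(x)|}.\]
   Context: The chain $(X^U_t)$: at each step an independent coin with Heads probability $\alpha$ is tossed; on Heads, $X_{t+1}=X_t+Y$ with $Y$ uniform on $R$; on Tails, $X_{t+1}=Z\cdot X_t$ with $Z$ uniform on $R$ (all independent). $U_R$ is the unit group of $R$. For $a\in R$, $I_a=Ra$ is the principal left ideal generated by $a$; $\phi$ is a fixed set of generators of the distinct principal left ideals of $R$ (one per ideal). $\mathrm{LAnn}_R(y)=\{r\in R\mid ry=0\}$. $\mathrm{LStab}(x)=\{u\in U_R\mid ux=x\}$ and $U_x\subseteq U_R$ is a fixed set of distinct representatives of the left cosets of $\mathrm{LStab}(x)$ in $U_R$ (so $|U_x|=[U_R:\mathrm{LStab}(x)]$). *)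

(* Defs.v *)
From HB Require Import structures.
From mathcomp Require Import all_boot all_order all_algebra.
Set Implicit Arguments. Unset Strict Implicit. Unset Printing Implicit Defensive.
Import Order.TTheory GRing.Theory Num.Theory.
Local Open Scope ring_scope.

Section Defs.
Variable A : finPzRingType.

Definition unitsR : {set A} := [set u | [exists v, (u * v == 1) && (v * u == 1)]].

Definition lideal (a : A) : {set A} := [set r * a | r : A].

Definition lann (y : A) : {set A} := [set r | r * y == 0].

Definition lstab (x : A) : {set A} := [set u in unitsR | u * x == x].

Definition lcosets_stab (x : A) : {set {set A}} :=
  [set [set u * s | s in lstab x] | u in unitsR].

(* |U_x| = [U_A : LStab(x)] = number of left cosets *)
Definition Ucard (x : A) : nat := #|lcosets_stab x|.

Definition ideal_gen_set (phi : {set A}) : Prop :=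
  (forall a : A, exists2 y, y \in phi & lideal y = lideal a) /\
  {in phi &, forall y1 y2, lideal y1 = lideal y2 -> y1 = y2}.

Variable K : realFieldType.

(* transition probability of the chain X^U: w.p. alpha add a uniform Y,
   w.p. 1-alpha multiply on the left by a uniform Z *)
Definition transU (alpha : K) (x z : A) : K :=
  alpha / #|A|%:R + (1 - alpha) * #|[set r : A | r * x == z]|%:R / #|A|%:R.

Definition stationaryU (alpha : K) (pi : A -> K) : Prop :=
  (forall x, 0 <= pi x) /\ \sum_(x : A) pi x = 1 /\
  (forall z, pi z = \sum_(x : A) pi x * transU alpha x z).

End Defs.

(* Main.v *)
Set Warnings "-notation-overridden,-ambiguous-paths,-notation-incompatible-prefix".
Require Import Defs.
From HB Require Import structures.
From mathcomp Require Import all_boot all_order all_algebra.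
From mathcomp Require Import ring lra.
Import Order.TTheory GRing.Theory Num.Theory.
Local Open Scope ring_scope.
Lemma lideal_mem (A : finPzRingType) (a r : A) : r * a \in lideal a.
Proof. by apply/imsetP; exists r. Qed.

Lemma lidealP (A : finPzRingType) (a x : A) :
  reflect (exists r, x = r * a) (x \in lideal a).
Proof.
apply: (iffP imsetP) => [[r _ ->]|[r ->]]; by exists r.
Qed.

Lemma lideal_self (A : finPzRingType) (a : A) : a \in lideal a.
Proof. by rewrite -{1}(mul1r a) lideal_mem. Qed.

Lemma lideal_sub (A : finPzRingType) (a b : A) :
  (a \in lideal b) = (lideal a \subset lideal b).
Proof.
apply/idP/idP => [/lidealP[s ->]|/subsetP H]; last by apply: H; exact: lideal_self.
apply/subsetP => z /lidealP[r ->]; rewrite mulrA; exact: lideal_mem.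
Qed.

Lemma unit_left (A : finPzRingType) (v r : A) : v * r = 1 -> r \in unitsR A.
Proof.
move=> vr.
have inj : injective (fun a : A => r * a).
  by move=> a b /= H; rewrite -(mul1r a) -(mul1r b) -vr -!mulrA H.
have [g fg gf] := injF_bij inj.
have rg : r * g 1 = 1 by exact: gf.
have gv : g 1 = v.
  by have := congr1 (fun t => v * t) rg; rewrite /= mulrA vr mul1r mulr1.
rewrite /unitsR inE; apply/existsP; exists v; apply/andP; split; apply/eqP => //.
by rewrite -gv.
Qed.

Lemma unitE (A : finPzRingType) (u : A) :
  u \in unitsR A -> exists v, u * v = 1 /\ v * u = 1.
Proof.
rewrite /unitsR inE => /existsP[v /andP[/eqP a /eqP b]]; by exists v.
Qed.

Lemma unitM (A : finPzRingType) (a b : A) :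
  a \in unitsR A -> b \in unitsR A -> a * b \in unitsR A.
Proof.
move=> /unitE[a' [_ ha]] /unitE[b' [_ hb]].
apply: (@unit_left _ (b' * a')).
by rewrite mulrA -(mulrA b') ha mulr1 hb.
Qed.

Lemma unit1 (A : finPzRingType) : (1 : A) \in unitsR A.
Proof. by apply: (@unit_left _ 1); rewrite mulr1. Qed.

Lemma card_shift (A : finPzRingType) (L : {set A}) (y r0 : A) :
  (forall a b, a \in L -> b \in L -> a - b \in L) -> r0 \in L ->
  #|[set r | (r \in L) && (r * y == r0 * y)]| = #|[set k | (k \in L) && (k * y == 0)]|.
Proof.
move=> Lsub r0L.
have inj : injective (fun x : A => x - r0).
  by apply: (can_inj (g := fun x => x + r0)) => x; rewrite subrK.
rewrite -(card_imset _ inj); apply: eq_card => k.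
have L0 : 0 \in L by rewrite -(subrr r0) Lsub.
have Ln : forall a, a \in L -> - a \in L by move=> a aL; rewrite -sub0r Lsub.
apply/imsetP/idP => [[r]|]; rewrite !inE.
  move=> /andP[rL /eqP ry] ->; rewrite Lsub //= mulrBl ry subrr eqxx //.
move=> /andP[kL /eqP k0]; exists (k + r0); last by rewrite addrK.
rewrite inE -{1}(opprK r0) Lsub ?Ln //= mulrDl k0 add0r eqxx //.
Qed.

Lemma ntrans (A : finPzRingType) (x z : A) :
  #|[set r | r * x == z]| = if z \in lideal x then #|lann x| else 0%N.
Proof.
case: ifP => [/lidealP[r0 ->]|Hz].
  have := @card_shift A setT x r0 (fun _ _ _ _ => in_setT _) (in_setT _).
  move=> H; rewrite (eq_card (B := [set r | (r \in setT) && (r * x == r0 * x)])); last first.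
    by move=> r; rewrite !inE.
  rewrite H; apply: eq_card => r; rewrite !inE //.
apply/eqP; rewrite cards_eq0; apply/eqP/setP => r; rewrite !inE.
apply/negbTE; apply: contraFN Hz => /eqP <-; exact: lideal_mem.
Qed.

Lemma card_lideal_lann (A : finPzRingType) (x : A) :
  (#|lideal x| * #|lann x| = #|A|)%N.
Proof.
symmetry; transitivity (\sum_(r : A) 1)%N.
  by rewrite sum1_card.
rewrite (partition_big (fun r => r * x) (mem (lideal x))) /=; last first.
  by move=> r _; exact: lideal_mem.
rewrite -sum_nat_const; apply: eq_bigr => z zL.
rewrite sum1_card.
transitivity #|[set r | r * x == z]|.
  by apply: eq_card => r; rewrite !inE.
by rewrite ntrans zL.
Qed.
Lemma assoc_unit (A : finPzRingType) (x y : A) :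
  lideal x = lideal y -> exists2 u, u \in unitsR A & x = u * y.
Proof.
move=> Exy.
have [s xs] : exists s, x = s * y by apply/lidealP; rewrite -Exy lideal_self.
have [t yt] : exists t, y = t * x by apply/lidealP; rewrite Exy lideal_self.
pose sig z (L : {set A}) := #|[set r | (r * y == z) && (lideal r == L)]|.
pose f z (L : {set A}) := #|[set r | (r \in L) && (r * y == z)]|.
have fval : forall r0 z, f z (lideal r0) =
    if [exists r, (r \in lideal r0) && (r * y == z)]
    then #|[set k | (k \in lideal r0) && (k * y == 0)]| else 0%N.
  move=> r0 z; rewrite /f; case: ifP => [/existsP[r1 /andP[r1L /eqP <-]]|].
    apply: card_shift r1L => a b /lidealP[p ->] /lidealP[q ->].
    by rewrite -mulrBl lideal_mem.
  move/negbT; rewrite negb_exists => /forallP H; apply/eqP; rewrite cards_eq0.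
  apply/eqP/setP => r; rewrite inE in_set0; exact/negbTE/H.
have fxy : forall r0, f x (lideal r0) = f y (lideal r0).
  move=> r0; rewrite !fval; congr (if _ then _ else _).
  apply/existsP/existsP => [[r1 /andP[/lidealP[p ->] /eqP H]]|[r1 /andP[/lidealP[p ->] /eqP H]]].
    exists (t * p * r0); rewrite lideal_mem /=.
    by rewrite -!mulrA (mulrA p) H -yt.
  exists (s * p * r0); rewrite lideal_mem /=.
  by rewrite -!mulrA (mulrA p) H -xs.
have fsum : forall r0 z, f z (lideal r0) =
    (\sum_(L : {set A} | L \subset lideal r0) sig z L)%N.
  move=> r0 z; rewrite /f -sum1_card.
  rewrite (partition_big (fun r => lideal r) (fun L => L \subset lideal r0)) /=; last first.
    by move=> r; rewrite inE => /andP[rL _]; move: rL; rewrite lideal_sub.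
  apply: eq_bigr => L LL; rewrite sum1_card /sig; apply: eq_card => r; rewrite unfold_in /= !inE.
  case E: (lideal r == L); rewrite ?andbF ?andbT //.
  by move/eqP: E => E; rewrite lideal_sub E LL.
have sig0 : forall z L, ~~ [exists r0, lideal r0 == L] -> sig z L = 0%N.
  move=> z L; rewrite negb_exists => /forallP H; apply/eqP; rewrite cards_eq0.
  apply/eqP/setP => r; rewrite !inE (negbTE (H r)) andbF //.
have step : forall L : {set A}, (forall L' : {set A}, L' \proper L -> sig x L' = sig y L') -> sig x L = sig y L.
  move=> L IH; case: (boolP [exists r0, lideal r0 == L]); last first.
    by move=> H; rewrite !sig0.
  move=> /existsP[r0 /eqP EL]; subst L.
  have := fxy r0; rewrite !fsum (bigD1 (lideal r0)) //= [X in _ = X -> _](bigD1 (lideal r0)) //=.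
  have E : (\sum_(L' : {set A} | (L' \subset lideal r0) && (L' != lideal r0)) sig x L' =
            \sum_(L' : {set A} | (L' \subset lideal r0) && (L' != lideal r0)) sig y L')%N.
    apply: eq_bigr => L' /andP[H1 H2]; apply: IH; rewrite properEneq; exact/andP.
  by rewrite E => /eqP; rewrite eqn_add2r => /eqP.
have sigeq : forall n (L : {set A}), (#|L| <= n)%N -> sig x L = sig y L.
  elim=> [|n IH] L HL; apply: step => L' /proper_card lt.
    by move: (leq_trans lt HL).
  apply: IH; rewrite -ltnS; exact: leq_trans lt HL.
have := sigeq _ (lideal (1 : A)) (leqnn _).
have : (0 < sig y (lideal (1%R : A)))%N.
  by rewrite card_gt0; apply/set0Pn; exists 1; rewrite inE mul1r !eqxx.
move=> H1 H2; move: H1; rewrite -H2 card_gt0 => /set0Pn[r]; rewrite inE.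
move=> /andP[/eqP ry /eqP rL].
have : (1 : A) \in lideal r by rewrite rL lideal_self.
move=> /lidealP[v v1]; exists r; last by rewrite ry.
by apply: (@unit_left _ v); rewrite -v1.
Qed.
Lemma lideal_unit (A : finPzRingType) (u y : A) :
  u \in unitsR A -> lideal (u * y) = lideal y.
Proof.
move=> /unitE[v [_ vu]]; apply/eqP; rewrite eqEsubset -!lideal_sub lideal_mem /=.
by rewrite -{1}(mul1r y) -vu -mulrA lideal_mem.
Qed.

Lemma class_eq (A : finPzRingType) (y : A) :
  [set x | lideal x == lideal y] = [set u * y | u in unitsR A].
Proof.
apply/setP => x; rewrite inE; apply/eqP/imsetP => [/assoc_unit[u uU ->]|[u uU ->]].
  by exists u.
exact: lideal_unit.
Qed.

Lemma Ucard_eq (A : finPzRingType) (y : A) :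
  Ucard y = #|[set x | lideal x == lideal y]|.
Proof.
rewrite class_eq /Ucard /lcosets_stab.
pose g (u : A) := [set u * s | s in lstab y].
pose h (S : {set A}) := odflt 0 [pick v in S] * y.
have gy : forall u v, v \in g u -> v * y = u * y.
  move=> u v /imsetP[s]; rewrite /lstab inE => /andP[_ /eqP sy] ->.
  by rewrite -mulrA sy.
have hg : forall u, u \in unitsR A -> h (g u) = u * y.
  move=> u uU; rewrite /h; case: pickP => [v vS|H] /=; first exact: gy.
  have : u \in g u.
    apply/imsetP; exists 1; last by rewrite mulr1.
    by rewrite /lstab inE unit1 mul1r eqxx.
  by rewrite H.
have gsub : forall u1 u2, u1 \in unitsR A -> u2 \in unitsR A ->
    u1 * y = u2 * y -> g u1 \subset g u2.
  move=> u1 u2 u1U u2U E; apply/subsetP => v /imsetP[s]; rewrite /lstab inE.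
  move=> /andP[sU /eqP sy] ->.
  have [w2 [w2a w2b]] := @unitE _ _ u2U.
  apply/imsetP; exists (w2 * u1 * s); last by rewrite !mulrA w2a mul1r.
  rewrite /lstab inE !unitM //=; last first.
    by apply: (@unit_left _ u2).
  by rewrite -!mulrA sy E mulrA w2b mul1r.
have -> : [set u * y | u in unitsR A] = [set h S | S in [set g u | u in unitsR A]].
  rewrite -imset_comp; apply: eq_in_imset => u uU /=; by rewrite hg.
rewrite card_in_imset // => S1 S2 /imsetP[u1 u1U ->] /imsetP[u2 u2U ->].
rewrite !hg // => E; apply/eqP; rewrite eqEsubset !gsub //.
Qed.
Theorem corollary3p3 (A : finPzRingType) (K : realFieldType) (alpha : K)
    (phi : {set A}) (pi : A -> K) :
  0 < alpha < 1 ->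
  ideal_gen_set phi ->
  stationaryU alpha pi ->
  forall x : A,
    pi x =
    (alpha + (1 - alpha) *
       \sum_(y in phi | lideal x \proper lideal y)
          (Ucard y)%:R * #|lann y|%:R * pi y)
    / (#|A|%:R - (1 - alpha) * (Ucard x)%:R * #|lann x|%:R).
Proof.
move=> /andP[a0 a1] [phi_ex phi_uniq] [pi0 [pi1 pistat]] z.
have NA : (0 < #|A|)%N by apply/card_gt0P; exists 0.
set N := (#|A|%:R : K).
have N0 : 0 < N by rewrite ltr0n.
have Nn0 : N != 0 by rewrite gt_eqF.
pose l (x : A) : K := #|lann x|%:R.
pose W (z : A) := \sum_(x | lideal z \subset lideal x) pi x * l x.
have key : forall z, N * pi z = alpha + (1 - alpha) * W z.
  move=> w; rewrite pistat mulr_sumr.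
  pose l' x := if lideal w \subset lideal x then l x else 0.
  have tr : forall x, N * (pi x * transU alpha x w) = alpha * pi x + (1 - alpha) * (pi x * l' x).
    move=> x; rewrite /transU /l' /l ntrans lideal_sub.
    by case: ifP => _; field.
  under eq_bigr => x _ do rewrite tr.
  rewrite big_split /= -mulr_sumr pi1 mulr1.
  congr (_ + _); rewrite -mulr_sumr; congr (_ * _).
  rewrite /W [RHS]big_mkcond /=; apply: eq_bigr => x _; rewrite /l'.
  by case: ifP; rewrite ?mulr0.
have piW : forall z z', lideal z = lideal z' -> pi z = pi z'.
  move=> w w' E; apply: (mulfI Nn0); rewrite !key; congr (_ + _ * _).
  by rewrite /W E.
have lW : forall z z', lideal z = lideal z' -> l z = l z'.
  move=> w w' E; rewrite /l; congr (_%:R).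
  have := card_lideal_lann _ w; rewrite -(card_lideal_lann _ w') E => /eqP.
  rewrite eqn_pmul2l ?(eqP) //; last by apply/card_gt0P; exists w'; exact: lideal_self.
  by move/eqP.
have classS : forall y, \sum_(x | lideal x == lideal y) pi x * l x = (Ucard y)%:R * l y * pi y.
  move=> y; rewrite (eq_bigr (fun _ => pi y * l y)); last first.
    by move=> x /eqP E; rewrite (piW _ _ E) (lW _ _ E).
  rewrite (eq_bigl (mem [set x | lideal x == lideal y])); last by move=> x; rewrite !inE.
  by rewrite sumr_const Ucard_eq -mulr_natl; ring.
pose rep x := odflt x [pick y in phi | lideal y == lideal x].
have repP : forall x, rep x \in phi /\ lideal (rep x) = lideal x.
  move=> x; rewrite /rep; case: pickP => [y /andP[yphi /eqP E]|H] //=.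
  have [y yphi E] := phi_ex x.
  by move: (H y); rewrite yphi E eqxx.
have Wsplit : W z = (Ucard z)%:R * l z * pi z +
    \sum_(y in phi | lideal z \proper lideal y) (Ucard y)%:R * #|lann y|%:R * pi y.
  rewrite /W (bigID (fun x => lideal x == lideal z)) /=; congr (_ + _).
    rewrite -classS; apply: eq_bigl => x.
    by case E: (lideal x == lideal z); rewrite ?andbT ?andbF // (eqP E) subxx.
  rewrite (eq_bigl (fun x => lideal z \proper lideal x)); last first.
    by move=> x; rewrite properEneq eq_sym andbC.
  rewrite (partition_big rep (fun y => (y \in phi) && (lideal z \proper lideal y))); last first.
    by move=> x H; have [-> ->] := repP x.
  apply: eq_bigr => y /andP[yphi prop]; rewrite -classS; apply: eq_bigl => x.
  apply/andP/eqP => [[_ /eqP <-]|E]; first by have [_ ->] := repP x.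
  split; first by rewrite E.
  have [r1 r2] := repP x.
  by apply/eqP; apply: phi_uniq => //; rewrite r2.
have cl : (Ucard z * #|lann z| <= #|A|)%N.
  rewrite -(card_lideal_lann _ z) leq_mul2r Ucard_eq; apply/orP; right.
  apply: subset_leq_card; apply/subsetP => x; rewrite inE => /eqP <-.
  exact: lideal_self.
have clK : (Ucard z)%:R * l z <= N by rewrite /l /N -natrM ler_nat.
have Dp : 0 < N - (1 - alpha) * (Ucard z)%:R * #|lann z|%:R.
  rewrite -mulrA -/(l z); nra.
have Dn0 := lt0r_neq0 Dp.
apply: (canRL (mulfK Dn0)).
have := key z; rewrite Wsplit /l => H.
rewrite mulrBr [pi z * N]mulrC H; ring.
Qed.
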